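(* Let $R$ be a commutative Noetherian ring of prime characteristic $p$ and $G$ an $x$-torsion-free left $R[x,f]$-module. Then there is an order-reversing bijection $\Delta:\mathcal{A}(G)\to\mathcal{I}(G)$ given by $\Delta(N)=(\operatorname{grann}_{R[x,f]}N)\cap R=(0:_RN)$, whose inverse (also order-reversing) is $\mathfrak{b}\mapsto\operatorname{ann}_G(\mathfrak{b}R[x,f])$.
   Context: $R[x,f]$ is the Frobenius skew polynomial ring: free left $R$-module on $(x^i)_{i\ge0}$, $xr=r^px$; $\mathfrak{b}R[x,f]=\bigoplus_n\mathfrak{b}x^n$. $x$-torsion-free: $xg=0\Rightarrow g=0$. Graded two-sided ideals of $R[x,f]$ are $\bigoplus_n\mathfrak{b}_nx^n$ with $(\mathfrak{b}_n)$ ascending chains of ideals. $\operatorname{ann}_G\mathfrak{B}=\{g:\theta g=0\ \forall\theta\in\mathfrak{B}\}$; $\mathcal{A}(G)$ is the set of special annihilator submodules, i.e. those of the form $\operatorname{ann}_G\mathfrak{B}$ with $\mathfrak{B}$ a graded two-sided ideal. $\operatorname{grann}_{R[x,f]}N$ is the set of $\sum r_ix^i$ with each $r_ix^i$ annihilating $N$. $\mathcal{I}(G)$ is the set of ideals $\mathfrak{b}$ of $R$ for which there is an $R[x,f]$-submodule $N$ of $G$ with $\operatorname{grann}_{R[x,f]}N=\mathfrak{b}R[x,f]$. *)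

(* Defs.v *)
From HB Require Import structures.
From mathcomp Require Import all_boot all_order all_algebra.
Set Implicit Arguments. Unset Strict Implicit. Unset Printing Implicit Defensive.
Import GRing.Theory.
Local Open Scope ring_scope.

Definition psubset {T : Type} (A B : T -> Prop) : Prop := forall t, A t -> B t.

Definition is_ideal (R : comNzRingType) (I : R -> Prop) : Prop :=
  I 0 /\ (forall a b, I a -> I b -> I (a + b)) /\ (forall r a, I a -> I (r * a)).

Definition noetherian (R : comNzRingType) : Prop :=
  forall I : nat -> R -> Prop, (forall n, is_ideal (I n)) ->
    (forall n, psubset (I n) (I n.+1)) ->
    exists N, forall n, (N <= n)%N -> psubset (I n) (I N).

(* A left R[x,f]-module (f = Frobenius r |-> r^p) is an R-module G together
   with an additive map xG (the action of x) such that x (r g) = r^p (x g). *)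
Definition frob_module (R : comNzRingType) (p : nat) (G : lmodType R)
  (xG : G -> G) : Prop :=
  (forall g h, xG (g + h) = xG g + xG h) /\
  (forall (r : R) g, xG (r *: g) = r ^+ p *: xG g).

Definition x_torsion_free (R : comNzRingType) (G : lmodType R) (xG : G -> G) :=
  forall g, xG g = 0 -> g = 0.

(* Elements of R[x,f] are represented by coefficient sequences s,
   standing for \sum_i s`_i x^i; their action on G: *)
Definition rxf_act (R : comNzRingType) (G : lmodType R) (xG : G -> G)
  (s : seq R) (g : G) : G :=
  \sum_(i < size s) s`_i *: iter i xG g.

Definition is_rxf_submod (R : comNzRingType) (G : lmodType R) (xG : G -> G)
  (N : G -> Prop) : Prop :=
  N 0 /\ (forall g h, N g -> N h -> N (g + h)) /\
  (forall (r : R) g, N g -> N (r *: g)) /\ (forall g, N g -> N (xG g)).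

(* Graded two-sided ideal  (+)_n b_n x^n, (b_n) an ascending chain of ideals. *)
Definition graded_ideal_family (R : comNzRingType) (b : nat -> R -> Prop) :=
  (forall n, is_ideal (b n)) /\ (forall n, psubset (b n) (b n.+1)).

Definition graded_elts (R : comNzRingType) (b : nat -> R -> Prop)
  (s : seq R) : Prop := forall i, b i s`_i.

Definition ext_ideal (R : comNzRingType) (b : R -> Prop) : seq R -> Prop :=
  graded_elts (fun _ => b).

Definition annG (R : comNzRingType) (G : lmodType R) (xG : G -> G)
  (B : seq R -> Prop) : G -> Prop :=
  fun g => forall th, B th -> rxf_act xG th g = 0.

(* grann_{R[x,f]} N : each homogeneous component r_i x^i annihilates N *)
Definition grann (R : comNzRingType) (G : lmodType R) (xG : G -> G)
  (N : G -> Prop) : seq R -> Prop :=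
  fun s => forall i n, N n -> s`_i *: iter i xG n = 0.

Definition annR (R : comNzRingType) (G : lmodType R) (N : G -> Prop) : R -> Prop :=
  fun r => forall n, N n -> r *: n = 0.

Definition in_specA (R : comNzRingType) (G : lmodType R) (xG : G -> G)
  (N : G -> Prop) : Prop :=
  exists b, graded_ideal_family b /\
    forall g, N g <-> annG xG (graded_elts b) g.

Definition in_specI (R : comNzRingType) (G : lmodType R) (xG : G -> G)
  (b : R -> Prop) : Prop :=
  is_ideal b /\ exists N, is_rxf_submod xG N /\
    forall s, grann xG N s <-> ext_ideal b s.

(* Main.v *)
Require Import Defs.
From mathcomp Require Import all_boot all_order all_algebra.
Import GRing.Theory.
Local Open Scope ring_scope.

Lemma iter_scale {R : comNzRingType} {p : nat} {G : lmodType R} {xG : G -> G} :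
  frob_module p xG -> forall i (r : R) g,
  iter i xG (r *: g) = r ^+ (p ^ i) *: iter i xG g.
Proof.
move=> [_ hs]; elim=> [|i IH] r g /=; first by rewrite expn0 expr1.
by rewrite IH hs -exprM expnS mulnC.
Qed.

Lemma iter_add {R : comNzRingType} {p : nat} {G : lmodType R} {xG : G -> G} :
  frob_module p xG -> forall i g h,
  iter i xG (g + h) = iter i xG g + iter i xG h.
Proof. by move=> [ha _]; elim=> [|i IH] g h //=; rewrite IH ha. Qed.

Lemma iter_zero {R : comNzRingType} {p : nat} {G : lmodType R} {xG : G -> G} :
  frob_module p xG -> forall i, iter i xG 0 = 0.
Proof.
move=> hfm i; have := iter_add hfm i 0 0; rewrite addr0 => /eqP.
by rewrite -subr_eq0 opprD addrA subrr sub0r oppr_eq0 => /eqP.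
Qed.

Lemma iter_tf {R : comNzRingType} {G : lmodType R} {xG : G -> G} :
  x_torsion_free xG -> forall i g, iter i xG g = 0 -> g = 0.
Proof.
move=> htf; elim=> [|i IH] g //= h; apply: IH; exact: htf.
Qed.

Lemma key {R : comNzRingType} {p : nat} {G : lmodType R} {xG : G -> G}
  (N : G -> Prop) : (0 < p)%N -> frob_module p xG -> x_torsion_free xG ->
  forall i (r : R), (forall n, N n -> r *: iter i xG n = 0) ->
  forall n, N n -> r *: n = 0.
Proof.
move=> hp hfm htf i r h n Nn; apply: (iter_tf htf i).
have hpi : (0 < p ^ i)%N by rewrite expn_gt0 hp.
rewrite (iter_scale hfm) -(prednK hpi) exprSr -scalerA h //.
by rewrite scaler0.
Qed.

Lemma iter_sub {R : comNzRingType} {G : lmodType R} {xG : G -> G}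
  (N : G -> Prop) : is_rxf_submod xG N -> forall i n, N n -> N (iter i xG n).
Proof.
move=> [_ [_ [_ hx]]]; elim=> [|i IH] n Nn //=; exact/hx/IH.
Qed.

Lemma annG_gr {R : comNzRingType} {G : lmodType R} {xG : G -> G}
  (b : nat -> R -> Prop) : (forall n, b n 0) -> forall g,
  annG xG (graded_elts b) g <-> forall i r, b i r -> r *: iter i xG g = 0.
Proof.
move=> hb g; split.
- move=> h i r bir.
  have H1 : graded_elts b (rcons (nseq i 0) r).
    move=> j; rewrite nth_rcons size_nseq nth_nseq if_same.
    case: (ltnP j i) => // hj; case: eqP => [->|] //.
  move: (h _ H1); rewrite /rxf_act size_rcons size_nseq big_ord_recr /=.
  rewrite big1 ?add0r; first by rewrite nth_rcons size_nseq ltnn eqxx.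
  by move=> j _; rewrite /= nth_rcons size_nseq ltn_ord nth_nseq ltn_ord scale0r.
- move=> h th hth; rewrite /rxf_act big1 // => j _; exact: h.
Qed.

Lemma annR_ideal {R : comNzRingType} {G : lmodType R} (N : G -> Prop) :
  is_ideal (annR N).
Proof.
split; first by move=> n _; rewrite scale0r.
split; first by move=> a b ha hb n Nn; rewrite scalerDl ha // hb // addr0.
by move=> r a ha n Nn; rewrite -scalerA ha // scaler0.
Qed.

Lemma specA_sub {R : comNzRingType} {p : nat} {G : lmodType R} {xG : G -> G}
  (N : G -> Prop) : frob_module p xG -> in_specA xG N -> is_rxf_submod xG N.
Proof.
move=> hfm [b [[hid hinc] hN]].
have hb0 : forall n, b n 0 by move=> n; case: (hid n).
have E : forall g, N g <-> (forall i r, b i r -> r *: iter i xG g = 0).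
  by move=> g; split => [/hN/(annG_gr _ hb0)|/(annG_gr _ hb0)/hN].
split; first by apply/E => i r _; rewrite (iter_zero hfm) scaler0.
split.
  move=> g h /E hg /E hh; apply/E => i r bir.
  by rewrite (iter_add hfm) scalerDr hg // hh // addr0.
split.
  move=> s g /E hg; apply/E => i r bir.
  by rewrite (iter_scale hfm) scalerA mulrC -scalerA hg // scaler0.
move=> g /E hg; apply/E => i r bir.
rewrite -iterSr; apply: hg; exact: hinc.
Qed.
Theorem proposition1p11 (R : comNzRingType) (p : nat) (G : lmodType R)
  (xG : G -> G) :
  noetherian R -> p \in [pchar R] -> frob_module p xG -> x_torsion_free xG ->
  (* Delta maps A(G) into I(G), and Delta(N) = grann N \cap R = (0 :_R N) *)
  (forall N, in_specA xG N ->
     in_specI xG (annR N) /\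
     (forall r : R, grann xG N [:: r] <-> annR N r)) /\
  (* the inverse map b |-> ann_G(bR[x,f]) maps I(G) into A(G) *)
  (forall b, in_specI xG b -> in_specA xG (annG xG (ext_ideal b))) /\
  (* the two maps are mutually inverse *)
  (forall N, in_specA xG N ->
     forall g, annG xG (ext_ideal (annR N)) g <-> N g) /\
  (forall b, in_specI xG b ->
     forall r, annR (annG xG (ext_ideal b)) r <-> b r) /\
  (* both are order-reversing *)
  (forall N1 N2, in_specA xG N1 -> in_specA xG N2 ->
     (psubset N1 N2 <-> psubset (annR N2) (annR N1))) /\
  (forall b1 b2, in_specI xG b1 -> in_specI xG b2 ->
     (psubset b1 b2 <->
      psubset (annG xG (ext_ideal b2)) (annG xG (ext_ideal b1)))).
Proof.
move=> _ hch hfm htf.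
have hp : (0 < p)%N := prime_gt0 (pcharf_prime hch).
have KE : forall N, is_rxf_submod xG N -> forall i r,
    (forall n, N n -> r *: iter i xG n = 0) <-> annR N r.
  move=> N sub i r; split; first by move=> h n Nn; exact: (key N hp hfm htf i r h n Nn).
  by move=> h n Nn; apply: h; exact: iter_sub.
have A3 : forall N, in_specA xG N ->
    forall g, annG xG (ext_ideal (annR N)) g <-> N g.
  move=> N hA g; have sub := specA_sub N hfm hA.
  case: hA => [b [[hid hinc] hN]].
  have hb0 : forall n, b n 0 by move=> n; case: (hid n).
  have E := annG_gr (fun _ => annR N) (fun _ => (annR_ideal N).1) g.
  split.
  - move/E => h; apply/hN/(annG_gr _ hb0) => i r bir.
    apply: (h i r); apply/(KE N sub i) => n /hN /(annG_gr _ hb0) hn; exact: hn.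
  - move=> Ng; apply/E => i r hr; apply: hr; exact: iter_sub.
have A4 : forall b, in_specI xG b ->
    forall r, annR (annG xG (ext_ideal b)) r <-> b r.
  move=> b [hid [N [sub hN]]] r; have hb0 := hid.1.
  have E := fun g => annG_gr (fun _ => b) (fun _ => hb0) g.
  split.
  - move=> h; have : ext_ideal b [:: r]; last by move/(_ 0%N).
    apply/hN => i n Nn; case: i => [|i] /=; last by rewrite nth_nil scale0r.
    apply: h; apply/E => i r' br'.
    have := (hN (nseq i.+1 r')).2 _ i n Nn; rewrite nth_nseq ltnSn; apply.
    by move=> j; rewrite nth_nseq; case: ifP.
  - move=> br g /E h; exact: (h 0%N r br).
split.
  move=> N hA; have sub := specA_sub N hfm hA; split.
    split; first exact: annR_ideal.
    exists N; split; first exact: sub.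
    move=> s; split.
    - by move=> h i; apply/(KE N sub i) => n Nn; exact: h.
    - by move=> h i; apply: (KE N sub i (s`_i)).2 (h i).
  move=> r; split; first by move=> h n Nn; exact: (h 0%N n Nn).
  by move=> h [|i] n Nn /=; [exact: h | rewrite nth_nil scale0r].
split.
  move=> b [hid _]; exists (fun _ => b); split; first by split=> // n t.
  by move=> g.
split; first exact: A3.
split; first exact: A4.
split.
  move=> N1 N2 h1 h2; split.
    by move=> s r hr n Nn; apply: hr; exact: s.
  move=> s g /(A3 _ h1) hg; apply/(A3 _ h2) => th hth; apply: hg => i.
  by apply: s; apply: hth.
move=> b1 b2 h1 h2; split.
  by move=> s g hg th hth; apply: hg => i; apply: s; apply: hth.
move=> s r /(A4 _ h1) hr; apply/(A4 _ h2) => g hg; apply: hr; apply: s; exact: hg.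
Qed.
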